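(* For each $n\in\mathbb N$ we have $\log p^{(j)}_n\sim j\log j$ as $j\to+\infty$.
   Context: Let $p_n$ denote the $n$-th prime number. Define $p^{(0)}_n=n$ and recursively $p^{(k+1)}_n=p_{p^{(k)}_n}$ for $k\in\mathbb N_0$. $\log$ is the natural logarithm and $a_j\sim b_j$ means $a_j/b_j\to1$. *)

(* Defs.v *)
From mathcomp Require Import all_boot.
From Stdlib Require Import Reals.

(* p_n = the n-th prime, 1-indexed: p_1 = 2, p_2 = 3, ...
   (nth_prime 0 is an irrelevant junk value; only n >= 1 is used). *)

Lemma exists_prime_above (m : nat) : exists p, (m < p) && prime p.
Proof. by case: (prime_above m) => p Hp Pp; exists p; rewrite Hp Pp. Qed.

Definition next_prime (m : nat) : nat := ex_minn (exists_prime_above m).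

Fixpoint prime0 (k : nat) : nat :=
  match k with
  | 0 => 2
  | k'.+1 => next_prime (prime0 k')
  end.

Definition nth_prime (n : nat) : nat := prime0 n.-1.

Definition iter_prime (k n : nat) : nat := iter k nth_prime n.

(* Main.v *)
Require Import Defs.
From mathcomp Require Import all_boot zify.

Set Implicit Arguments.
Unset Strict Implicit.


Lemma next_primeP m : [/\ m < next_prime m, prime (next_prime m) &
  forall q, m < q -> prime q -> next_prime m <= q].
Proof.
rewrite /next_prime; case: ex_minnP => p /andP[h1 h2] hmin; split => // q h3 h4.
by apply: hmin; rewrite h3 h4.
Qed.

Definition primepi x := count prime (iota 0 x.+1).

Lemma primepiS x : primepi x.+1 = primepi x + prime x.+1.
Proof. by rewrite /primepi -[x.+2]addn1 iotaD count_cat /= addn0. Qed.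

Lemma pi_mono m n : m <= n -> primepi m <= primepi n.
Proof.
elim: n => [|n IH]; first by rewrite leqn0 => /eqP->.
rewrite leq_eqVlt => /orP[/eqP->//|]; rewrite ltnS => /IH h.
by rewrite primepiS; apply: leq_trans h (leq_addr _ _).
Qed.

Lemma pi_gap m d : m + d < next_prime m -> primepi (m + d) = primepi m.
Proof.
elim: d => [|d IH]; first by rewrite addn0.
move=> h; rewrite addnS primepiS IH; last by apply: ltnW; rewrite -addnS.
case: (next_primeP m) => _ _ hmin.
case pr: (prime (m + d).+1); last by rewrite addn0.
have hq : m < (m + d).+1 by lia.
have := hmin _ hq pr.
by rewrite leqNgt -addnS h.
Qed.

Lemma pi_next m : primepi (next_prime m) = (primepi m).+1.
Proof.
case: (next_primeP m) => h1 h2 _.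
have e : next_prime m = (m + (next_prime m - m.+1)).+1 by lia.
by rewrite e primepiS -e h2 pi_gap ?addn1 //; lia.
Qed.

Lemma prime0_prime k : prime (prime0 k).
Proof. by case: k => [|k] //=; case: (next_primeP (prime0 k)). Qed.

Lemma prime0_ge k : k.+2 <= prime0 k.
Proof. elim: k => [|k IH] //=; case: (next_primeP (prime0 k)) => h _ _; lia. Qed.

Lemma pi_prime0 k : primepi (prime0 k) = k.+1.
Proof. elim: k => [|k IH] //=; by rewrite pi_next IH. Qed.

Lemma pi_prime0_pred k : primepi (prime0 k).-1 = k.
Proof.
have h := prime0_ge k.
have e : prime0 k = ((prime0 k).-1).+1 by lia.
have := pi_prime0 k; rewrite e primepiS -e prime0_prime addn1; by case.
Qed.

Lemma nth_prime_facts m : 1 <= m ->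
  [/\ prime (nth_prime m), primepi (nth_prime m) = m, primepi (nth_prime m).-1 = m.-1
    & m.+1 <= nth_prime m].
Proof.
case: m => // m _; rewrite /nth_prime /=; split.
- exact: prime0_prime.
- exact: pi_prime0.
- exact: pi_prime0_pred.
- exact: prime0_ge.
Qed.


Lemma bin_le_pow2 n k : 'C(n, k) <= 2 ^ n.
Proof.
elim: n k => [|n IH] [|k] //.
  by rewrite bin0 expn_gt0.
by rewrite binS expnS mul2n -addnn leq_add.
Qed.

Lemma central_ge k : 2 ^ k <= 'C(k.*2, k).
Proof.
elim: k => [|k IH] //.
rewrite doubleS binS.
have e : 'C(k.*2.+1, k) = 'C(k.*2.+1, k.+1).
  by rewrite -bin_sub; [congr binomial; lia | lia].
rewrite e binS expnS mul2n -addnn.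
have h : 2 ^ k <= 'C(k.*2, k.+1) + 'C(k.*2, k) by apply: leq_trans IH (leq_addl _ _).
by apply: leq_add.
Qed.

Lemma prime_ndvd_fact p n : prime p -> n < p -> ~~ (p %| n`!).
Proof.
move=> pp; elim: n => [|n IH] h.
  by rewrite fact0 dvdn1; apply/eqP => e; move: pp; rewrite e.
rewrite factS Euclid_dvdM // negb_or IH ?andbT; last by lia.
by apply/negP => /dvdn_leq => /(_ (ltn0Sn _)); lia.
Qed.

Lemma sum_ind_le (f : nat -> nat) t b :
  (forall i, f i <= 1) -> (forall i, t < i -> f i = 0) ->
  \sum_(1 <= i < b) f i <= t.
Proof.
move=> h1 h0.
suff: \sum_(1 <= i < b) f i <= minn b.-1 t by move=> h; apply: leq_trans h _; apply: geq_minr.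
elim: b => [|b IH]; first by rewrite big_geq.
case: b IH => [|b] IH; first by rewrite big_geq.
rewrite big_nat_recr //=.
case: (leqP b.+1 t) => hb.
  by apply: leq_trans (leq_add IH (h1 b.+1)) _; have := geq_minl b t; rewrite -pred_Sn; lia.
rewrite h0 // addn0; apply: leq_trans IH _; have := geq_minr b t; have := geq_minl b.+1 t; rewrite -pred_Sn; lia.
Qed.

Lemma legendre_ext p k N : prime p -> k <= N ->
  \sum_(1 <= i < N.+1) k %/ p ^ i = \sum_(1 <= i < k.+1) k %/ p ^ i.
Proof.
move=> pp hk.
rewrite (@big_cat_nat _ _ _ k.+1) //=.
rewrite [X in _ + X]big1_seq ?addn0 // => i /andP[_].
rewrite mem_index_iota => /andP[hi _].
apply: divn_small; apply: leq_trans hi (ltnW (ltn_expl _ (prime_gt1 pp))).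
Qed.

Lemma logn_central p k : prime p -> 0 < k ->
  p ^ logn p 'C(k.*2, k) <= k.*2.
Proof.
move=> pp k0; rewrite -addnn.
set t := trunc_log p (k + k).
have ht : p ^ t <= k + k by apply: trunc_logP; [exact: prime_gt1 | lia].
apply: leq_trans ht; apply: leq_pexp2l; first exact: prime_gt0.
have bf := bin_fact (leq_addr k k).
rewrite (_ : k + k - k = k) in bf; last by lia.
have := congr1 (logn p) bf.
rewrite !lognM ?fact_gt0 ?muln_gt0 ?fact_gt0 ?bin_gt0 ?leq_addr // !logn_fact //.
rewrite -(@legendre_ext p k (k + k)) //; last by lia.
set e := logn p _ => E.
pose f i := (k + k) %/ p ^ i - 2 * (k %/ p ^ i).
have hge : forall i, 2 * (k %/ p ^ i) <= (k + k) %/ p ^ i.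
  move=> i; rewrite leq_divRL ?expn_gt0 ?prime_gt0 //.
  have := leq_divM k (p ^ i); lia.
have hsplit : \sum_(1 <= i < (k + k).+1) (k + k) %/ p ^ i =
   \sum_(1 <= i < (k + k).+1) f i + 2 * \sum_(1 <= i < (k + k).+1) k %/ p ^ i.
  rewrite big_distrr /= -big_split /=; apply: eq_bigr => i _.
  by rewrite /f subnK // hge.
rewrite hsplit in E.
have hf : \sum_(1 <= i < (k + k).+1) f i <= t.
  apply: sum_ind_le => i.
    rewrite /f; have hpi : 0 < p ^ i by rewrite expn_gt0 prime_gt0.
    have h1 := ltn_ceil k hpi.
    have : (k + k) %/ p ^ i < (2 * (k %/ p ^ i)).+2.
      by rewrite ltn_divLR //; nia.
    lia.
  move=> hi; rewrite /f divn_small; first by rewrite sub0n.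
  apply: leq_trans (trunc_log_ltn _ (prime_gt1 pp)) _.
  by rewrite leq_exp2l ?prime_gt1.
lia.
Qed.

Lemma prod_const_seq (s : seq nat) c : \prod_(i <- s) c = c ^ size s.
Proof. by elim: s => [|x s IH]; rewrite ?big_nil ?big_cons ?IH ?expnS. Qed.

Lemma prime_le_of_dvd_fact p n : prime p -> p %| n`! -> p <= n.
Proof.
move=> pp h; rewrite leqNgt; apply/negP => hn.
by move: (prime_ndvd_fact pp hn); rewrite h.
Qed.

Lemma central_le k : 0 < k -> 'C(k.*2, k) <= (k.*2) ^ primepi (k.*2).
Proof.
move=> k0.
have C0 : 0 < 'C(k.*2, k) by rewrite bin_gt0 -addnn leq_addr.
rewrite {1}(prod_prime_decomp C0) prime_decompE big_map /=.
apply: (@leq_trans (\prod_(p <- primes 'C(k.*2, k)) (k.*2))).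
  rewrite big_seq [X in _ <= X]big_seq; apply: leq_prod => p.
  by rewrite mem_primes => /and3P[pp _ _]; exact: logn_central.
rewrite prod_const_seq; apply: leq_pexp2l; first by lia.
rewrite /primepi -size_filter; apply: uniq_leq_size; first exact: primes_uniq.
move=> p; rewrite mem_primes mem_filter mem_iota => /and3P[pp _ hd].
rewrite pp /= add0n ltnS; apply: prime_le_of_dvd_fact => //.
apply: dvdn_trans hd _.
have bf := bin_fact (leq_addr k k); rewrite addnn in bf.
by rewrite -bf dvdn_mulr.
Qed.


Definition Q a b := \prod_(a <= p < b) (if prime p then p else 1).

Lemma Q_pos a b : 0 < Q a b.
Proof. by apply: prodn_gt0 => p; case: ifP => // /prime_gt0. Qed.

Lemma Q_step a b : a <= b -> Q a b.+1 = Q a b * (if prime b then b else 1).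
Proof. by move=> h; rewrite /Q big_nat_recr. Qed.

Lemma Q_split a b c : a <= b -> b <= c -> Q a c = Q a b * Q b c.
Proof. by move=> h1 h2; rewrite /Q (@big_cat_nat _ _ _ b). Qed.

Lemma Q_coprime a b q : prime q -> b <= q -> coprime (Q a b) q.
Proof.
move=> pq; elim: b => [|b IH] hb; first by rewrite /Q big_geq // coprime1n.
case: (leqP a b) => hab; last by rewrite /Q big_geq // coprime1n.
rewrite Q_step // coprimeMl IH ?(ltnW hb) //=.
case: ifP => pb; last exact: coprime1n.
rewrite prime_coprime // dvdn_prime2 //; apply/negP => /eqP e; lia.
Qed.

Lemma Q_dvd a b N : (forall p, prime p -> a <= p -> p < b -> p %| N) -> Q a b %| N.
Proof.
elim: b => [|b IH] h; first by rewrite /Q big_geq.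
case: (leqP a b) => hab; last by rewrite /Q big_geq.
rewrite Q_step //; case: ifP => pb; last first.
  by rewrite muln1; apply: IH => p pp h1 h2; apply: h => //; lia.
rewrite Gauss_dvd ?Q_coprime // IH ?h //.
by move=> p pp h1 h2; apply: h => //; lia.
Qed.

Lemma Q_count_gen (r : seq nat) c : (forall i, i \in r -> c <= i) ->
  c ^ count prime r <= \prod_(i <- r) (if prime i then i else 1).
Proof.
elim: r => [|x r IH] h; first by rewrite big_nil.
rewrite big_cons /=; case: ifP => px.
  rewrite add1n expnS; apply: leq_mul; first by apply: h; rewrite inE eqxx.
  by apply: IH => i hi; apply: h; rewrite inE hi orbT.
by rewrite add0n mul1n; apply: IH => i hi; apply: h; rewrite inE hi orbT.
Qed.

Lemma prime_dvd_bin p m : prime p -> m.+1 < p -> p <= m.*2.+1 -> p %| 'C(m.*2.+1, m).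
Proof.
move=> pp h1 h2.
have hm : m <= m.*2.+1 by lia.
have bf := bin_fact hm.
rewrite (_ : m.*2.+1 - m = m.+1) in bf; last by lia.
have hd : p %| (m.*2.+1)`! by apply: dvdn_fact; rewrite prime_gt0.
rewrite -bf Gauss_dvdl // in hd.
rewrite coprimeMr !prime_coprime // !prime_ndvd_fact //; lia.
Qed.

Lemma Q_seg m : Q m.+2 m.*2.+2 <= 2 ^ m.*2.+1.
Proof.
apply: leq_trans (bin_le_pow2 _ m).
apply: dvdn_leq; first by rewrite bin_gt0; lia.
apply: Q_dvd => p pp h1 h2; apply: prime_dvd_bin => //; lia.
Qed.

Lemma primorial_bound x : Q 0 x.+1 <= 8 ^ x.
Proof.
elim/ltn_ind: x => x IH.
case: (leqP x 2) => hx.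
  by case: x hx {IH} => [|[|[|]]] //= _; rewrite /Q /index_iota /= !big_cons big_nil.
have := odd_double_half x.
set m := x./2; case: (boolP (odd x)) => ox /= e.
  have hm : 1 <= m by lia.
  rewrite (@Q_split 0 m.+2 x.+1) //; last by lia.
  have h1 := IH m.+1 ltac:(lia).
  have h2 : Q m.+2 x.+1 <= 2 ^ m.*2.+1 by rewrite -e add1n; exact: Q_seg.
  apply: leq_trans (leq_mul h1 h2) _.
  rewrite (_ : 8 = 2 ^ 3) // -!expnM -expnD leq_exp2l //; lia.
rewrite Q_step //.
have px : prime x = false.
  apply/negP => /even_prime [e2|]; [lia | by rewrite (negbTE ox)].
rewrite px muln1.
have e1 : x = x.-1.+1 by lia.
rewrite {1}e1; apply: leq_trans (IH x.-1 ltac:(lia)) _.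
by rewrite leq_exp2l //; lia.
Qed.

Lemma pi_upper y x : y <= x -> y.+1 ^ (primepi x - y.+1) <= 8 ^ x.
Proof.
move=> hyx.
have e : primepi x = count prime (iota 0 y.+1) + count prime (iota y.+1 (x - y)).
  by rewrite /primepi (_ : x.+1 = y.+1 + (x - y)) ?iotaD ?count_cat //; lia.
have hc : count prime (iota 0 y.+1) <= y.+1 by rewrite -[X in _ <= X](size_iota 0) count_size.
apply: (@leq_trans (y.+1 ^ count prime (iota y.+1 (x - y)))).
  by apply: leq_pexp2l => //; lia.
apply: (@leq_trans (Q y.+1 x.+1)).
  rewrite /Q /index_iota (_ : x.+1 - y.+1 = x - y) //; apply: Q_count_gen.
  by move=> i; rewrite mem_iota; lia.
apply: leq_trans (primorial_bound x).
rewrite (@Q_split 0 y.+1 x.+1) ?ltnS //.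
by apply: leq_pmull; apply: Q_pos.
Qed.


Lemma up_nat m : 2 <= m ->
  let X := nth_prime m in let k := (X.-1)./2 in
  [/\ 1 <= k, k.*2 < X, X <= k.*2 + 2 & 2 ^ k <= (k.*2) ^ (m.-1)].
Proof.
move=> hm X k.
have [_ hpi hpi1 hX] := nth_prime_facts (ltnW hm).
have hk := odd_double_half X.-1.
have k1 : 1 <= k by rewrite /k; lia.
split => //; try lia.
apply: leq_trans (central_ge k) _.
apply: leq_trans (central_le k1) _.
apply: leq_pexp2l; first by lia.
rewrite -hpi1; apply: pi_mono; rewrite /k; lia.
Qed.

Lemma low_nat m : 1 <= m ->
  (m./2).+1 ^ (m - (m./2).+1) <= 8 ^ (nth_prime m).
Proof.
move=> hm; have [_ hpi _ hX] := nth_prime_facts hm.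
rewrite -{2}hpi; apply: pi_upper.
have := leq_half_double m; lia.
Qed.

Lemma iter_ge j n : 1 <= n -> j + n <= iter_prime j n.
Proof.
move=> hn; elim: j => [|j IH] //=.
change (j.+1 + n <= nth_prime (iter_prime j n)).
have [_ _ _ h] := nth_prime_facts (leq_trans hn (leq_trans (leq_addl j n) IH)).
lia.
Qed.


Unset Implicit Arguments.
Set Strict Implicit.

From Stdlib Require Import Reals Lra Lia.
Open Scope R_scope.

Lemma INR_expn a b : INR (expn a b) = INR a ^ b.
Proof. elim: b => [|b IH]; first by rewrite expn0. by rewrite expnS mult_INR IH. Qed.

Lemma ln_le' x y : 0 < x -> x <= y -> ln x <= ln y.
Proof.
move=> hx hy; case: (Rle_lt_or_eq_dec _ _ hy) => h.
  by apply: Rlt_le; apply: ln_increasing.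
by rewrite h; apply: Rle_refl.
Qed.

Lemma ln_sub1 y : 0 < y -> ln y <= y - 1.
Proof. move=> hy; have := exp_ineq1_le (ln y); rewrite exp_ln //; lra. Qed.

Lemma ln2_le1 : ln 2 <= 1.
Proof. have := ln_sub1 2; lra. Qed.

Lemma ln_half y : 0 < y -> ln y <= y / 2.
Proof.
move=> hy.
have e : y = (y / 2) * 2 by field.
rewrite e ln_mult; try lra.
have := ln_sub1 (y / 2) ltac:(lra); have := ln2_le1; lra.
Qed.

Lemma ln_sqrt2 y : 0 < y -> ln y <= 2 * sqrt y.
Proof.
move=> hy; have hs : 0 < sqrt y by apply: sqrt_lt_R0.
rewrite -{1}(sqrt_sqrt y); last lra.
rewrite ln_mult //; have := ln_sub1 _ hs; lra.
Qed.

Lemma ln_pos' x : 1 < x -> 0 < ln x.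
Proof. move=> h; rewrite -ln_1; apply: ln_increasing; lra. Qed.

Lemma ln_nonneg x : 1 <= x -> 0 <= ln x.
Proof. move=> h; rewrite -ln_1; apply: ln_le'; lra. Qed.

Lemma ln3_ge1 : 1 <= ln 3.
Proof. rewrite -{1}(ln_exp 1); apply: ln_le'; [apply: exp_pos | apply: exp_le_3]. Qed.

Lemma nt_lower m : (4 <= m)%coq_nat ->
  ln (INR m) + ln (ln (INR m)) - ln (8 * ln 8) <= ln (INR (nth_prime m)).
Proof.
move=> hm.
have hm1 : leq 1 m by apply/leP; lia.
have h := low_nat hm1.
move/leP: h => h; apply le_INR in h; rewrite !INR_expn in h.
have [_ _ _ hX] := nth_prime_facts hm1.
move/leP: hX => hX.
have ho := odd_double_half m.
set y := m./2 in h ho.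
have hy1 : (y + y <= m)%coq_nat by move: ho; case: (odd m) => /=; lia.
have hy2 : (m <= y + y + 1)%coq_nat by move: ho; case: (odd m) => /=; lia.
have hy3 : (y.+1 <= m)%coq_nat by lia.
apply le_INR in hy1; apply le_INR in hy2; apply le_INR in hX.
rewrite !plus_INR /= in hy1 hy2.
rewrite S_INR in hX.
have hM4 : 4 <= INR m by have := le_INR _ _ hm; rewrite /=; lra.
have hY0 : 0 <= INR y by apply: pos_INR.
have hpos : 0 < (INR y.+1) by rewrite S_INR; lra.
have hl := ln_le' _ _ (pow_lt _ (m - y.+1) hpos) h.
rewrite !ln_pow in hl; try lra; last by apply: (lt_INR 0); lia.
rewrite minus_INR // S_INR in hl.
replace (INR 8) with 8 in hl by (simpl; lra).
have hlM : ln (INR m) <= 2 * ln (INR y + 1).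
  have e : 2 * ln (INR y + 1) = ln ((INR y + 1) * (INR y + 1)) by rewrite ln_mult; lra.
  rewrite e; apply: ln_le'; nra.
have hlMp : 0 <= ln (INR m) by apply: ln_nonneg; lra.
have hprod : (INR m / 4) * (ln (INR m) / 2) <= (INR m - (INR y + 1)) * ln (INR y + 1).
  apply: Rmult_le_compat; lra.
have h8 : 0 < ln 8 by apply: ln_pos'; lra.
have hx0 : 0 < (INR (nth_prime m)) by lra.
have hfin : (INR m) * ln (INR m) <= (8 * ln 8) * (INR (nth_prime m)) by nra.
have hlMp' : 0 < ln (INR m) by apply: ln_pos'; lra.
have hpp : 0 < INR m * ln (INR m) by apply: Rmult_lt_0_compat; lra.
have := ln_le' _ _ hpp hfin.
rewrite (ln_mult (INR m)) //; last lra.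
rewrite (ln_mult (8 * ln 8)); lra.
Qed.

Lemma nt_upper m : (36 <= m)%coq_nat ->
  ln (INR (nth_prime m)) <= ln (INR m) + ln (ln (INR m)) + (ln 6 + ln 3).
Proof.
move=> hm.
have hm2 : leq 2 m by apply/leP; lia.
have [hk1 hk2 hk3 hk4] := up_nat hm2.
have [_ _ _ hX] := nth_prime_facts (ltnW hm2).
move: hk1 hk2 hk3 hk4 hX.
set X := nth_prime m; set k := ((X.-1)./2).
move=> /leP hk1 /leP hk2 /leP hk3 /leP hk4 /leP hX.
apply le_INR in hk4; rewrite !INR_expn in hk4.
have hk2' : (k + k < X)%coq_nat by rewrite addnn.
have hk3' : (X <= k + k + 2)%coq_nat by rewrite addnn.
rewrite -addnn in hk4.
apply lt_INR in hk2'; apply le_INR in hk3'; apply le_INR in hX; apply le_INR in hk1.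
rewrite !plus_INR in hk2' hk3' hk4; rewrite S_INR in hX.
replace (INR 2) with 2 in hk3' by (simpl; lra).
replace (INR 2) with 2 in hk4 by (simpl; lra).
have hM : 36 <= INR m by have := le_INR _ _ hm; rewrite /=; lra.
replace (INR 1) with 1 in hk1 by (simpl; lra).
have hl := ln_le' _ _ (pow_lt 2 k ltac:(lra)) hk4.
rewrite !ln_pow in hl; try lra.
have em : INR m.-1 = INR m - 1 by rewrite -subn1 minus_INR; [simpl; lra | lia].
rewrite em in hl.
have hl2 := ln_lt_2.
have hx3 : 3 <= INR X by lra.
have hlx : 1 <= ln (INR X) by apply: Rle_trans ln3_ge1 (ln_le' _ _ _ hx3); lra.
have hlk : ln (INR k + INR k) <= ln (INR X) by apply: ln_le'; lra.
have hlk0 : 0 <= ln (INR k + INR k) by apply: ln_nonneg; lra.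
have h1a := Rmult_le_compat_l (INR m - 1) _ _ ltac:(lra) hlk.
have hA : INR k * ln 2 <= INR m * ln (INR X) by lra.
have h2 : INR X <= 6 * INR m * ln (INR X) by nra.
have hx0 : 0 < INR X by lra.
have hl6 : ln (INR X) <= ln 6 + ln (INR m) + ln (ln (INR X)).
  have := ln_le' _ _ hx0 h2.
  rewrite ln_mult; try nra.
  rewrite ln_mult; lra.
have hh := ln_half (ln (INR X)) ltac:(lra).
have e36 : ln 36 = ln 6 + ln 6 by rewrite -ln_mult; try lra; congr ln; lra.
have h36 : ln 36 <= ln (INR m) by apply: ln_le'; lra.
have h3 : ln (INR X) <= 3 * ln (INR m) by lra.
have hlm : 0 < ln (INR m) by apply: ln_pos'; lra.
have h4 : ln (ln (INR X)) <= ln 3 + ln (ln (INR m)).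
  rewrite -ln_mult; try lra; apply: ln_le'; lra.
lra.
Qed.


Lemma ln_succ_le x : 0 < x -> ln (x + 1) <= ln x + / x.
Proof.
move=> hx.
have e : x + 1 = x * (1 + / x) by field; lra.
have hp : 0 < 1 + / x by have := Rinv_0_lt_compat _ hx; lra.
rewrite e ln_mult //; have := ln_sub1 _ hp; lra.
Qed.

Lemma div_lt_aux D P eps : 0 < P -> D < eps * P -> D / P < eps.
Proof.
move=> hP h.
have hi : 0 < / P by apply: Rinv_0_lt_compat.
have := Rmult_lt_compat_r _ _ _ hi h.
have e : eps * P * / P = eps by field; lra.
rewrite e; rewrite /Rdiv; lra.
Qed.

Lemma div_gt_aux D P eps : 0 < P -> - (eps * P) < D -> - eps < D / P.
Proof.
move=> hP h.
have hi : 0 < / P by apply: Rinv_0_lt_compat.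
have := Rmult_lt_compat_r _ _ _ hi h.
have e : - (eps * P) * / P = - eps by field; lra.
rewrite e; rewrite /Rdiv; lra.
Qed.

Lemma growth (L : nat -> R) (K : R) (J : nat) :
  0 < K -> (3 <= J)%coq_nat ->
  (forall j, (J <= j)%coq_nat -> ln (INR j + 1) <= L j) ->
  (forall j, (J <= j)%coq_nat ->
      L j + ln (L j) - K <= L (S j) /\ L (S j) <= L j + ln (L j) + K) ->
  Un_cv (fun j => L j / (INR j * ln (INR j))) 1.
Proof.
move=> hK hJ hLb hrec.
have hJ3 : 3 <= INR J by have := le_INR _ _ hJ; rewrite /=; lra.
have L1 : forall j, (J <= j)%coq_nat -> 1 <= L j.
  move=> j hj; apply: Rle_trans (hLb j hj).
  apply: Rle_trans ln3_ge1 _; apply: ln_le'; first lra.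
  have := le_INR _ _ hj; lra.
have [N1 hN1] := INR_unbounded (exp (exp (K + 1))).
set J1 := Nat.max J N1.
have hJ1 : (J <= J1)%coq_nat by apply: Nat.le_max_l.
have step1 : forall j, (J1 <= j)%coq_nat -> L j + 1 <= L (S j).
  move=> j hj.
  have hjJ : (J <= j)%coq_nat by lia.
  have hjN : INR N1 <= INR j by apply: le_INR; lia.
  have hb := hLb j hjJ.
  have h1 : exp (K + 1) <= L j.
    apply: Rle_trans hb; rewrite -{1}(ln_exp (exp (K + 1))).
    apply: ln_le'; [apply: exp_pos | lra].
  have h2 : K + 1 <= ln (L j).
    rewrite -{1}(ln_exp (K + 1)); apply: ln_le' => //; apply: exp_pos.
  have := proj1 (hrec j hjJ); lra.
have hP1 : forall d, INR d <= L (J1 + d)%nat.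
  elim=> [|d IH].
    have -> : (J1 + 0)%nat = J1 by lia.
    by rewrite /=; have := L1 J1 hJ1; lra.
  rewrite addnS S_INR; have := step1 (J1 + d)%nat ltac:(lia); lra.
set J2 := (2 * J1)%nat.
have hL2 : forall j, (J2 <= j)%coq_nat -> INR j / 2 <= L j.
  move=> j hj.
  have e : j = (J1 + (j - J1))%nat by lia.
  have := hP1 (j - J1)%nat; rewrite -e minus_INR; last lia.
  have := le_INR _ _ hj; rewrite /J2 mult_INR /=; lra.
have hJ2J : (J <= J2)%coq_nat by rewrite /J2; lia.
have hJ2 : 6 <= INR J2 by rewrite /J2 mult_INR /=; have := le_INR _ _ hJ1; lra.
set A := K + 3 + ln (INR J2).
have hLow : forall d, let j := INR (J2 + d)%nat in j * ln j - A * j <= L (J2 + d)%nat.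
  elim=> [|d IH] /=.
    have -> : (J2 + 0)%nat = J2 by lia.
    have := L1 J2 hJ2J.
    have : INR J2 * ln (INR J2) - A * INR J2 = INR J2 * (ln (INR J2) - A) by ring.
    have : 0 <= INR J2 * (A - ln (INR J2)) by apply: Rmult_le_pos; rewrite /A; lra.
    have : INR J2 * (A - ln (INR J2)) = - (INR J2 * (ln (INR J2) - A)) by ring.
    lra.
  move: IH; rewrite addnS S_INR.
  set j := INR (J2 + d)%nat => IH.
  have hj6 : 6 <= j by rewrite /j; have := le_INR J2 (J2 + d)%nat ltac:(lia); lra.
  have [hr _] := hrec (J2 + d)%nat ltac:(lia).
  have hl2 := hL2 (J2 + d)%nat ltac:(lia); rewrite -/j in hl2.
  have hlL : ln (j / 2) <= ln (L (J2 + d)%nat) by apply: ln_le'; lra.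
  have e : ln (j / 2) = ln j - ln 2 by rewrite /Rdiv ln_mult ?ln_Rinv; lra.
  have := ln2_le1.
  have hs := ln_succ_le j ltac:(lra).
  have hm := Rmult_le_compat_l (j + 1) _ _ ltac:(lra) hs.
  have hi : (j + 1) * / j <= 2.
    have : (j + 1) * / j = 1 + / j by field; lra.
    have : / j <= 1 by apply: Rle_trans (_ : / j <= / 1) _; [apply: Rinv_le_contravar; lra | rewrite Rinv_1; lra].
    lra.
  have : (j + 1) * (ln j + / j) = j * ln j + ln j + (j + 1) * / j by ring.
  have hA3 : K + 3 <= A by rewrite /A; have := ln_nonneg (INR J2) ltac:(lra); lra.
  simpl in IH; lra.
set B := 2 * K + 2 + L J.
have hB : 2 * K + 2 <= B by rewrite /B; have := L1 J ltac:(lia); lra.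
have hUp : forall d, let j := INR (J + d)%nat in
    L (J + d)%nat <= j * ln j + j * ln (ln j) + B * j.
  elim=> [|d IH] /=.
    have -> : (J + 0)%nat = J by lia.
    have hl : 1 <= ln (INR J) by apply: Rle_trans ln3_ge1 (ln_le' _ _ _ hJ3); lra.
    have hll : 0 <= ln (ln (INR J)) by apply: ln_nonneg.
    have : 0 <= INR J * ln (INR J) by apply: Rmult_le_pos; lra.
    have : 0 <= INR J * ln (ln (INR J)) by apply: Rmult_le_pos; lra.
    have : B <= B * INR J by have := L1 J ltac:(lia); rewrite /B; nra.
    rewrite /B; lra.
  move: IH; rewrite addnS S_INR.
  set j := INR (J + d)%nat => IH.
  have hj3 : 3 <= j by rewrite /j; have := le_INR J (J + d)%nat ltac:(lia); lra.
  have hl : 1 <= ln j by apply: Rle_trans ln3_ge1 (ln_le' _ _ _ hj3); lra.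
  have hll : 0 <= ln (ln j) by apply: ln_nonneg.
  have hll2 : ln (ln j) <= ln j by have := ln_sub1 (ln j) ltac:(lra); lra.
  have [_ hr] := hrec (J + d)%nat ltac:(lia).
  have hL0 : 1 <= L (J + d)%nat := L1 (J + d)%nat ltac:(lia).
  simpl in IH.
  set U := j * ln j + j * ln (ln j) + B * j.
  have hU1 : U <= (j * ln j) * (2 + B).
    have : j * ln (ln j) <= j * ln j by apply: Rmult_le_compat_l; lra.
    have : B * j <= B * (j * ln j).
      apply: Rmult_le_compat_l; first lra.
      have := Rmult_le_compat_l j _ _ ltac:(lra) hl; lra.
    rewrite /U; lra.
  have hlnU : ln U <= ln j + ln (ln j) + (2 + B) / 2.
    have hU0 : 0 < U by rewrite /U; lra.
    apply: Rle_trans (ln_le' _ _ hU0 hU1) _.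
    rewrite !ln_mult; try lra; try (apply: Rmult_lt_0_compat; lra).
    have := ln_half (2 + B) ltac:(lra); lra.
  have hlnL : ln (L (J + d)%nat) <= ln U by apply: ln_le'; rewrite /U; lra.
  have h1 : ln j <= ln (j + 1) by apply: ln_le'; lra.
  have h2 : ln (ln j) <= ln (ln (j + 1)) by apply: ln_le'; lra.
  have h3 := Rmult_le_compat_l (j + 1) _ _ ltac:(lra) h1.
  have h4 := Rmult_le_compat_l (j + 1) _ _ ltac:(lra) h2.
  have : (j + 1) * ln j = j * ln j + ln j by ring.
  have : (j + 1) * ln (ln j) = j * ln (ln j) + ln (ln j) by ring.
  rewrite /U in hlnU hlnL |- *; lra.
move=> eps heps.
have hA0 : 0 <= A by rewrite /A; have := ln_nonneg (INR J2) ltac:(lra); lra.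
set S0 := (A + B + 2) / eps + 1.
have hS0 : eps * S0 = A + B + 2 + eps by rewrite /S0; field; lra.
have hq : 0 <= (A + B + 2) / eps.
  apply: Rmult_le_pos; [lra | apply: Rlt_le; apply: Rinv_0_lt_compat; lra].
have hS01 : 1 <= S0 by rewrite /S0; lra.
have [N3 hN3] := INR_unbounded (exp (S0 ^ 2)).
exists (Nat.max N3 J2) => j hj.
have hjN : (N3 <= j)%coq_nat by lia.
have hjJ2 : (J2 <= j)%coq_nat by lia.
have hj6 : 6 <= INR j by have := le_INR _ _ hjJ2; lra.
set l := ln (INR j).
have hl : S0 ^ 2 <= l.
  rewrite /l -{1}(ln_exp (S0 ^ 2)); apply: ln_le'; first apply: exp_pos.
  have := le_INR _ _ hjN; lra.
set s := sqrt l.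
have hl1 : 1 <= l by nra.
have hss : s * s = l by rewrite /s sqrt_sqrt; lra.
have hsS : S0 <= s by rewrite /s -(sqrt_pow2 S0); [apply: sqrt_le_1_alt | lra].
have hll : ln l <= 2 * s by apply: ln_sqrt2; lra.
have hlow := hLow (j - J2)%nat; simpl in hlow.
rewrite (_ : (J2 + (j - J2))%nat = j) in hlow; last lia.
have hup := hUp (j - J)%nat; simpl in hup.
rewrite (_ : (J + (j - J))%nat = j) in hup; last lia.
rewrite -/l in hlow hup.
have hP : 0 < INR j * l by apply: Rmult_lt_0_compat; lra.
rewrite /R_dist.
have e : L j / (INR j * l) - 1 = (L j - INR j * l) / (INR j * l) by field; lra.
have hs1 : 1 <= s by lra.
have hs0 : 0 <= eps * s by apply: Rmult_le_pos; lra.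
have h1 : eps * S0 * s <= eps * l.
  rewrite -hss; have := Rmult_le_compat_l (eps * s) _ _ hs0 hsS; lra.
have hS0s : eps * S0 * s = (A + B + 2 + eps) * s by rewrite hS0.
have hBs : B <= B * s by have := Rmult_le_compat_l B 1 s ltac:(lra) hs1; lra.
have hAs : 0 <= A * s by apply: Rmult_le_pos; lra.
have heps1 : eps <= eps * s by have := Rmult_le_compat_l eps 1 s ltac:(lra) hs1; lra.
rewrite e; apply: Rabs_def1.
  apply: div_lt_aux => //.
  have h2 : ln l + B < eps * l by lra.
  have := Rmult_lt_compat_l (INR j) _ _ ltac:(lra) h2.
  lra.
apply: div_gt_aux => //.
have hAs1 : A <= A * s by have := Rmult_le_compat_l A 1 s hA0 hs1; lra.
have h2 : A < eps * l by lra.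
have := Rmult_lt_compat_l (INR j) _ _ ltac:(lra) h2.
lra.
Qed.


Theorem corollary7 (n : nat) : is_true (leq 1 n) ->
  Un_cv (fun j : nat => ln (INR (iter_prime j n)) / (INR j * ln (INR j))) 1.
Proof.
move=> hn.
have h6 : 0 <= ln 6 by apply: ln_nonneg; lra.
have h3 : 0 <= ln 3 by apply: ln_nonneg; lra.
have hab := Rle_abs (ln (8 * ln 8)).
apply: (@growth (fun j => ln (INR (iter_prime j n))) (1 + Rabs (ln (8 * ln 8)) + (ln 6 + ln 3)) 36).
- have := Rabs_pos (ln (8 * ln 8)); lra.
- lia.
- move=> j hj /=.
  have h := @iter_ge j n hn; move/leP: h => h; apply le_INR in h.
  rewrite plus_INR in h.
  have hn1 : 1 <= INR n by move/leP: hn => hn'; apply le_INR in hn'; simpl in hn'; lra.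
  apply: ln_le'; last lra.
  have := pos_INR j; lra.
- move=> j hj /=.
  change (iter_prime j.+1 n) with (nth_prime (iter_prime j n)).
  have h := @iter_ge j n hn; move/leP: h => h.
  have hm : (36 <= iter_prime j n)%coq_nat by lia.
  have hl := nt_lower (iter_prime j n) ltac:(lia).
  have hu := nt_upper (iter_prime j n) hm.
  have := Rabs_pos (ln (8 * ln 8)); split; lra.
Qed.
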